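(* Let $G$ be any connected graph on $N\ge2$ vertices and, for $x\ge0$, let $$\rho_N(x)=\frac{\mathbb{1}+x|\psi_G\rangle\langle\psi_G|}{2^N+x}$$ be the maximally (globally) depolarized graph state. If $x\le 2$, equivalently if the fidelity $\langle\psi_G|\rho_N(x)|\psi_G\rangle=(1+x)/(2^N+x)$ is at most $3/(2^N+2)$, then $\rho_N(x)$ cannot be purified to $|\psi_G\rangle$ by any protocol.
   Context: Graph state $|\psi_G\rangle$: common $+1$ eigenstate of $K_i=X_i\prod_{\{i,j\}\in E_G}Z_j$ (equivalently $|+\rangle^{\otimes N}$ followed by controlled-phase gates along every edge). Purification: each qubit held by a distinct party holding that qubit from arbitrarily many copies; using SLOCC they must produce $|\psi_G\rangle$ with fidelity arbitrarily close to 1. Known input: a two-qubit Bell-diagonal state with weight $\lambda_{00}$ on the target Bell state is purifiable iff $\lambda_{00}>1/2$. *)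

(* Defs.v *)
From mathcomp Require Import all_boot all_order all_algebra.
Set Implicit Arguments. Unset Strict Implicit. Unset Printing Implicit Defensive.
Import Order.TTheory GRing.Theory Num.Theory.
Local Open Scope ring_scope.

(* Computational basis of N qubits: z : 'I_N -> bool.  Operators on N qubits
   are given by their matrix entries in this basis. *)
Definition config (N : nat) := {ffun 'I_N -> bool}.
Definition op (C : numClosedFieldType) (N : nat) := config N -> config N -> C.

(* Graph state |psi_G> = prod_{edges} CZ |+>^N :
   amplitude (-1)^(#edges {i,j} with z_i = z_j = 1) / sqrt(2^N).
   Edges are counted once via i < j. *)
Definition edge_count N (e : rel 'I_N) (z : config N) : nat :=
  #|[set p : 'I_N * 'I_N | [&& (p.1 < p.2)%N, e p.1 p.2, z p.1 & z p.2]]|.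

Definition graph_state (C : numClosedFieldType) N (e : rel 'I_N) : config N -> C :=
  fun z => (-1) ^+ edge_count e z / sqrtC (2 ^+ N).

Definition depolarized_graph_state (C : numClosedFieldType) N (e : rel 'I_N) (x : C)
  : op C N :=
  fun z z' => ((z == z')%:R + x * graph_state C e z * (graph_state C e z')^* )
              / (2 ^+ N + x).

(* n copies: party i holds qubit i of every copy, so a basis state of the
   n-copy system is S : 'I_N -> ('I_n -> bool); copy k is [ffun i => S i k]. *)
Definition copies_config (N n : nat) := {ffun 'I_N -> {ffun 'I_n -> bool}}.
Definition copy_k N n (S : copies_config N n) (k : 'I_n) : config N :=
  [ffun i => S i k].

Definition tensor_power (C : numClosedFieldType) N (rho : op C N) (n : nat)
  : copies_config N n -> copies_config N n -> C :=
  fun S S' => \prod_(k < n) rho (copy_k S k) (copy_k S' k).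

(* SLOCC protocol on n copies: each party i applies a (single Kraus)
   linear map A i : (C^2)^{(x) n} -> C^2, with matrix entries A i b s. *)
Definition local_ops (C : numClosedFieldType) (N n : nat) :=
  'I_N -> bool -> {ffun 'I_n -> bool} -> C.

(* Unnormalized output state (A_1 (x) ... (x) A_N) rho^{(x)n} (...)^dagger. *)
Definition slocc_output (C : numClosedFieldType) N (rho : op C N) (n : nat)
  (A : local_ops C N n) : op C N :=
  fun c c' => \sum_(S : copies_config N n) \sum_(S' : copies_config N n)
     (\prod_(i < N) A i (c i) (S i)) * tensor_power rho S S'
     * (\prod_(i < N) A i (c' i) (S' i))^*.

Definition trace_op (C : numClosedFieldType) N (sigma : op C N) : C :=
  \sum_(z : config N) sigma z z.

Definition overlap (C : numClosedFieldType) N (psi : config N -> C) (sigma : op C N) : C :=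
  \sum_(z : config N) \sum_(z' : config N) (psi z)^* * sigma z z' * psi z'.

(* rho is purifiable to psi: for every eps > 0 there are a number n of copies
   and local operators succeeding with nonzero probability whose normalized
   output has fidelity >= 1 - eps with psi. *)
Definition purifiable (C : numClosedFieldType) N (rho : op C N) (psi : config N -> C) : Prop :=
  forall eps : C, 0 < eps ->
    exists (n : nat) (A : local_ops C N n),
      0 < trace_op (slocc_output rho A) /\
      (1 - eps) * trace_op (slocc_output rho A) <= overlap psi (slocc_output rho A).

(* Main.v *)
Require Import Defs.
From mathcomp Require Import all_boot all_order all_algebra.
From mathcomp Require Import ring.
Set Implicit Arguments. Unset Strict Implicit. Unset Printing Implicit Defensive.
Import Order.TTheory GRing.Theory Num.Theory.
Local Open Scope ring_scope.



Definition upd N (T : Type) (i0 : 'I_N) (z : {ffun 'I_N -> T}) (v : T) : {ffun 'I_N -> T} :=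
  [ffun i => if i == i0 then v else z i].

Lemma upd_at N (T : Type) (i0 : 'I_N) z (v : T) : upd i0 z v i0 = v.
Proof. by rewrite ffunE eqxx. Qed.

Lemma upd_upd N (T : Type) (i0 : 'I_N) z (v w : T) : upd i0 (upd i0 z v) w = upd i0 z w.
Proof. by apply/ffunP=> i; rewrite !ffunE; case: (i == i0). Qed.

Lemma upd_id N (T : Type) (i0 : 'I_N) z : upd i0 z (z i0) = z :> {ffun 'I_N -> T}.
Proof. by apply/ffunP=> i; rewrite !ffunE; case: eqP => // ->. Qed.

Lemma swap_sum (C : numClosedFieldType) N (T : finType) (i0 : 'I_N)
  (F : {ffun 'I_N -> T} -> {ffun 'I_N -> T} -> C) :
  \sum_(z : {ffun 'I_N -> T}) \sum_(z' : {ffun 'I_N -> T}) F z z' =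
  \sum_(z : {ffun 'I_N -> T}) \sum_(z' : {ffun 'I_N -> T}) F (upd i0 z (z' i0)) (upd i0 z' (z i0)).
Proof.
rewrite !pair_bigA /=.
pose h := fun p : {ffun 'I_N -> T} * {ffun 'I_N -> T} =>
  (upd i0 p.1 (p.2 i0), upd i0 p.2 (p.1 i0)).
have hK : cancel h h.
  by case=> z z'; rewrite /h /= !upd_at !upd_upd !upd_id.
by rewrite (reindex_inj (can_inj hK)).
Qed.

Definition psd_dec (C : numClosedFieldType) (X : finType) (K : X -> X -> C) : Prop :=
  exists (J : finType) (w : J -> C) (u : J -> X -> C),
    (forall j, 0 <= w j) /\ forall z z', K z z' = \sum_j w j * u j z * (u j z')^*.

Lemma dec_fam (C : numClosedFieldType) (X J : finType) (w : J -> C) (u : J -> X -> C) :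
  (forall j, 0 <= w j) -> psd_dec (fun z z' => \sum_j w j * u j z * (u j z')^*).
Proof. by move=> hw; exists J, w, u. Qed.

Lemma dec_ext (C : numClosedFieldType) (X : finType) (K1 K2 : X -> X -> C) :
  (forall z z', K1 z z' = K2 z z') -> psd_dec K1 -> psd_dec K2.
Proof.
move=> h [J [w [u [hw hK]]]]; exists J, w, u; split=> // z z'.
by rewrite -h.
Qed.

Lemma dec_add (C : numClosedFieldType) (X : finType) (K1 K2 : X -> X -> C) :
  psd_dec K1 -> psd_dec K2 -> psd_dec (fun z z' => K1 z z' + K2 z z').
Proof.
move=> [J1 [w1 [u1 [hw1 hK1]]]] [J2 [w2 [u2 [hw2 hK2]]]].
exists (J1 + J2)%type, (fun j => match j with inl a => w1 a | inr b => w2 b end),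
  (fun j => match j with inl a => u1 a | inr b => u2 b end).
split; first by case.
by move=> z z'; rewrite big_sumType /= hK1 hK2.
Qed.

Lemma dec_scale (C : numClosedFieldType) (X : finType) (K : X -> X -> C) (c : C) :
  0 <= c -> psd_dec K -> psd_dec (fun z z' => c * K z z').
Proof.
move=> hc [J [w [u [hw hK]]]]; exists J, (fun j => c * w j), u; split.
  by move=> j; apply: mulr_ge0.
by move=> z z'; rewrite hK mulr_sumr; apply: eq_bigr => j _; rewrite !mulrA.
Qed.

Lemma dec_tensor (C : numClosedFieldType) (X Y : finType) n (K : X -> X -> C)
  (cp : Y -> 'I_n -> X) :
  psd_dec K -> psd_dec (fun S S' => \prod_(k < n) K (cp S k) (cp S' k)).
Proof.
move=> [J [w [u [hw hK]]]].
exists {ffun 'I_n -> J}, (fun f : {ffun 'I_n -> J} => \prod_k w (f k)),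
  (fun (f : {ffun 'I_n -> J}) S => \prod_k u (f k) (cp S k)); split.
  by move=> f; apply: prodr_ge0 => k _.
move=> S S'.
rewrite (eq_bigr (fun k => \sum_j w j * u j (cp S k) * (u j (cp S' k))^*)); last first.
  by move=> k _; rewrite hK.
rewrite bigA_distr_bigA /=; apply: eq_bigr => f _.
by rewrite rmorph_prod -!big_split.
Qed.

Lemma dec_out (C : numClosedFieldType) (X Y : finType) (K : Y -> Y -> C)
  (b : X -> Y -> C) :
  psd_dec K -> psd_dec (fun c c' => \sum_S \sum_S' b c S * K S S' * (b c' S')^*).
Proof.
move=> [J [w [u [hw hK]]]].
exists J, w, (fun j c => \sum_S b c S * u j S); split=> // c c'.
rewrite (eq_bigr (fun S => \sum_j \sum_S' w j * (b c S * u j S) * (b c' S' * u j S')^*)).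
  rewrite exchange_big /=; apply: eq_bigr => j _.
  rewrite rmorph_sum /= -mulrA mulr_suml mulr_sumr; apply: eq_bigr => S _.
  rewrite !mulr_sumr; apply: eq_bigr => S' _; ring.
move=> S _; rewrite exchange_big /=; apply: eq_bigr => S' _.
rewrite hK mulr_sumr mulr_suml; apply: eq_bigr => j _.
by rewrite rmorphM /=; ring.
Qed.



Definition PT (C : numClosedFieldType) N (T : finType) (i0 : 'I_N)
  (K : {ffun 'I_N -> T} -> {ffun 'I_N -> T} -> C) (z z' : {ffun 'I_N -> T}) :=
  K (upd i0 z (z' i0)) (upd i0 z' (z i0)).

Lemma key (C : numClosedFieldType) N (i0 : 'I_N) (psi : config N -> C) (sigma : op C N) :
  psd_dec (PT i0 sigma) ->
  (forall Phi : config N -> C, 0 <= \sum_z Phi z * (Phi z)^* - 2 * \sum_(z : config N) \sum_(z' : config N)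
     (psi (upd i0 z (z' i0)))^* * (Phi z * (Phi z')^*) * psi (upd i0 z' (z i0))) ->
  0 <= trace_op sigma - 2 * overlap psi sigma.
Proof.
move=> [J [w [u [hw hK]]]] hQ.
have htr : trace_op sigma = \sum_j w j * \sum_z u j z * (u j z)^*.
  rewrite /trace_op (eq_bigr (fun z => PT i0 sigma z z)); last first.
    by move=> z _; rewrite /PT !upd_id.
  rewrite (eq_bigr (fun z => \sum_j w j * u j z * (u j z)^*)); last by move=> z _; rewrite hK.
  rewrite exchange_big /=; apply: eq_bigr => j _; rewrite mulr_sumr.
  by apply: eq_bigr => z _; rewrite mulrA.
have hov : overlap psi sigma = \sum_j w j * \sum_(z : config N) \sum_(z' : config N)
     (psi (upd i0 z (z' i0)))^* * (u j z * (u j z')^*) * psi (upd i0 z' (z i0)).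
  rewrite /overlap (swap_sum i0 (fun z z' => (psi z)^* * sigma z z' * psi z')).
  rewrite (eq_bigr (fun z : config N => \sum_j w j * \sum_(z' : config N)
     ((psi (upd i0 z (z' i0)))^* * (u j z * (u j z')^*) * psi (upd i0 z' (z i0))))); last first.
    move=> z _.
    rewrite (eq_bigr (fun z' : config N => \sum_j w j * ((psi (upd i0 z (z' i0)))^* *
     (u j z * (u j z')^*) * psi (upd i0 z' (z i0))))); last first.
      move=> z' _.
      rewrite -/(PT i0 sigma z z') hK mulr_sumr mulr_suml; apply: eq_bigr => j _; ring.
    rewrite exchange_big /=; apply: eq_bigr => j _; by rewrite mulr_sumr.
  by rewrite exchange_big /=; apply: eq_bigr => j _; rewrite mulr_sumr.
rewrite htr hov mulr_sumr -sumrB; apply: sumr_ge0 => j _.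
by rewrite mulrCA -mulrBr; apply: mulr_ge0.
Qed.



Lemma sum_delta (C : numClosedFieldType) (X : finType) (z : X) (F : X -> C) :
  \sum_y (z == y)%:R * F y = F z.
Proof.
rewrite (bigD1 z) //= eqxx mul1r big1 ?addr0 // => y hy.
by rewrite eq_sym (negbTE hy) mul0r.
Qed.

Lemma conj_nat (C : numClosedFieldType) (n : nat) : (n%:R : C)^* = n%:R.
Proof. exact: rmorph_nat. Qed.

Lemma delta2 (C : numClosedFieldType) (X : finType) (z z' y : X) :
  (z == y)%:R * (z' == y)%:R = (z == z')%:R * (z == y)%:R :> C.
Proof.
case: (eqVneq z y) => [->|hzy]; last by rewrite !mul0r mulr0.
by rewrite eq_sym mulr1 mul1r.
Qed.

Definition lw (C : numClosedFieldType) (X : finType) (t : X -> C) (p : X * X) (z : X) : C :=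
  (z == p.1)%:R * t p.2 - (z == p.2)%:R * t p.1.

Lemma expand4 (C : numClosedFieldType) (p q r s a1 a2 a3 a4 : C) :
  (a1 * q - a3 * p) * (a2 * s - a4 * r) =
  a1 * a2 * (q * s) - a1 * r * (a4 * q) - a2 * p * (a3 * s) + a3 * a4 * (p * r).
Proof. ring. Qed.

Lemma lagrange (C : numClosedFieldType) (X : finType) (t : X -> C) :
  \sum_z t z * (t z)^* = 1 ->
  forall z z', (z == z')%:R = (t z)^* * t z' + 2^-1 * \sum_(p : X * X) lw t p z * (lw t p z')^*.
Proof.
move=> ht z z'.
rewrite -(pair_bigA _ (fun y y' => lw t (y, y') z * (lw t (y, y') z')^*)) /=.
have inner : forall y, \sum_y' lw t (y, y') z * (lw t (y, y') z')^* =
   (z == y)%:R * (z' == y)%:R - (z == y)%:R * (t y)^* * t z' - (z' == y)%:R * t y * (t z)^*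
   + (z == z')%:R * t y * (t y)^*.
  move=> y.
  rewrite (eq_bigr (fun y' => ((z == y)%:R * (z' == y)%:R) * (t y' * (t y')^*)
     - ((z == y)%:R * (t y)^*) * ((z' == y')%:R * t y')
     - ((z' == y)%:R * t y) * ((z == y')%:R * (t y')^*)
     + ((z == z')%:R * t y * (t y)^*) * (z == y')%:R)); last first.
    move=> y' _; rewrite /lw /= rmorphB !rmorphM /= !conj_nat.
    have -> : (z == z')%:R * t y * (t y)^* * (z == y')%:R =
       (z == y')%:R * (z' == y')%:R * (t y * (t y)^*) by rewrite delta2; ring.
    exact: expand4.
  rewrite big_split /= !sumrB -!mulr_sumr ht mulr1 !sum_delta.
  rewrite (eq_bigr (fun i => (z == i)%:R * 1)); last by move=> i _; rewrite mulr1.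
  by rewrite sum_delta mulr1.
rewrite (eq_bigr _ (fun y _ => inner y)).
rewrite big_split /= !sumrB -!mulr_suml !sum_delta.
rewrite (eq_bigr (fun i => (z == z')%:R * (t i * (t i)^*))); last by move=> i _; rewrite mulrA.
rewrite -mulr_sumr ht mulr1 eq_sym.
by move: (z' == z)%:R => a; field.
Qed.



Lemma bessel (C : numClosedFieldType) (I X : finType) (k : I -> X -> C) (m : C) :
  0 < m ->
  (forall i j, \sum_z k i z * (k j z)^* = (i == j)%:R * m) ->
  forall Phi : X -> C,
  \sum_i (\sum_z (k i z)^* * Phi z) * (\sum_z (k i z)^* * Phi z)^*
    <= m * \sum_z Phi z * (Phi z)^*.
Proof.
move=> hm horth Phi.
set c := fun i => \sum_z (k i z)^* * Phi z.
have hcc : forall i, (c i)^* = \sum_z k i z * (Phi z)^*.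
  by move=> i; rewrite /c rmorph_sum; apply: eq_bigr => z _; rewrite rmorphM /= conjCK.
have mr : m^* = m by apply: geC0_conj; apply: ltW.
set v := fun z => m * Phi z - \sum_i c i * k i z.
have hv : forall z, (v z)^* = m * (Phi z)^* - \sum_i (c i)^* * (k i z)^*.
  move=> z; rewrite /v rmorphB rmorphM /= mr rmorph_sum; congr (_ - _).
  by apply: eq_bigr => i _; rewrite rmorphM /=.
have h1 : forall i, \sum_z k i z * (v z)^* = 0.
  move=> i.
  rewrite (eq_bigr (fun z => m * (k i z * (Phi z)^*) - \sum_j (c j)^* * (k i z * (k j z)^*))); last first.
    move=> z _; rewrite hv mulrBr mulr_sumr; congr (_ - _); first by ring.
    by apply: eq_bigr => j _; ring.
  rewrite sumrB -mulr_sumr -hcc exchange_big /=.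
  rewrite (eq_bigr (fun j => (c j)^* * ((i == j)%:R * m))); last first.
    by move=> j _; rewrite -mulr_sumr horth.
  rewrite (bigD1 i) //= eqxx mul1r big1 ?addr0; first by rewrite mulrC subrr.
  by move=> j hj; rewrite eq_sym (negbTE hj) mul0r mulr0.
have h2 : \sum_z v z * (v z)^* = m * \sum_z Phi z * (v z)^*.
  rewrite mulr_sumr.
  rewrite (eq_bigr (fun z => m * (Phi z * (v z)^*) - \sum_i c i * (k i z * (v z)^*))); last first.
    move=> z _; rewrite {1}/v mulrBl mulr_suml; congr (_ - _); first by ring.
    by apply: eq_bigr => i _; ring.
  rewrite sumrB exchange_big /=.
  rewrite [X in _ - X]big1 ?subr0 // => i _; by rewrite -mulr_sumr h1 mulr0.
have h3 : \sum_z Phi z * (v z)^* = m * \sum_z Phi z * (Phi z)^* - \sum_i c i * (c i)^*.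
  rewrite (eq_bigr (fun z => m * (Phi z * (Phi z)^*) - \sum_i (c i)^* * ((k i z)^* * Phi z))); last first.
    move=> z _; rewrite hv mulrBr mulr_sumr; congr (_ - _); first by ring.
    by apply: eq_bigr => i _; ring.
  rewrite sumrB -mulr_sumr exchange_big /=; congr (_ - _).
  by apply: eq_bigr => i _; rewrite -mulr_sumr mulrC.
have h0 : 0 <= \sum_z v z * (v z)^*.
  by apply: sumr_ge0 => z _; apply: mul_conjC_ge0.
rewrite h2 h3 in h0.
rewrite -subr_ge0; rewrite pmulr_rge0 // in h0.
Qed.



Definition flip N (z : config N) (j : 'I_N) : config N :=
  [ffun i => if i == j then ~~ z i else z i].

Lemma flipK N (j : 'I_N) : cancel (fun z : config N => flip z j) (fun z => flip z j).
Proof. by move=> z; apply/ffunP=> i; rewrite !ffunE; case: (i == j); rewrite ?negbK. Qed.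

Lemma sum_flip (C : numClosedFieldType) N (j : 'I_N) (F : config N -> C) :
  \sum_z F z = \sum_z F (flip z j).
Proof. by rewrite (reindex_inj (can_inj (flipK j))). Qed.

Lemma psi_conj (C : numClosedFieldType) N (e : rel 'I_N) z :
  (graph_state C e z)^* = graph_state C e z.
Proof.
by rewrite /graph_state rmorphM fmorphV /= rmorphXn rmorphN1 geC0_conj // sqrtC_ge0
  exprn_ge0 // ler0n.
Qed.

Lemma psi_sq (C : numClosedFieldType) N (e : rel 'I_N) z :
  graph_state C e z * graph_state C e z = (2 ^+ N)^-1.
Proof.
rewrite /graph_state mulrACA -expr2 sqrr_sign mul1r -invfM -expr2 sqrtCK //.
Qed.

Lemma sign_card (C : numClosedFieldType) (T : finType) (P Q : pred T) :
  (-1) ^+ #|[set p | P p && Q p]| = \prod_(p | P p) (-1) ^+ (Q p) :> C.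
Proof.
rewrite -sum1_card (big_morph (fun n : nat => (-1) ^+ n : C) (fun a b => exprD _ a b) (expr0 _)).
rewrite big_mkcond [RHS]big_mkcond /=; apply: eq_bigr => p _.
by rewrite inE; case: (P p); case: (Q p).
Qed.

Lemma card_half (C : numClosedFieldType) N (i0 : 'I_N) (a : bool) :
  \sum_(z : config N) (z i0 == a)%:R = (2 ^+ N) / 2 :> C.
Proof.
have h2 : \sum_(z : config N) ((z i0 == a)%:R + (z i0 == ~~ a)%:R) = (2 ^+ N : C).
  rewrite (eq_bigr (fun _ => 1)); last by move=> z _; case: (z i0); case: a; rewrite /= ?addr0 ?add0r.
  by rewrite sumr_const card_ffun card_bool card_ord -natrX.
have h1 : \sum_(z : config N) (z i0 == a)%:R = \sum_(z : config N) (z i0 == ~~ a)%:R :> C.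
  rewrite (sum_flip i0); apply: eq_bigr => z _; rewrite ffunE eqxx.
  by clear h2; case: (z i0); case: a.
rewrite big_split /= -h1 in h2.
by rewrite -h2; field.
Qed.

Definition Ppair N (e : rel 'I_N) (p : 'I_N * 'I_N) := ((p.1 < p.2)%N && e p.1 p.2).

Lemma ec_sign (C : numClosedFieldType) N (e : rel 'I_N) (z : config N) :
  (-1) ^+ edge_count e z = \prod_(p | Ppair e p) (-1) ^+ (z p.1 && z p.2) :> C.
Proof.
rewrite /edge_count.
have -> : [set p : 'I_N * 'I_N | [&& (p.1 < p.2)%N, e p.1 p.2, z p.1 & z p.2]] =
   [set p | Ppair e p && (z p.1 && z p.2)].
  by apply/setP => p; rewrite !inE /Ppair !andbA.
exact: sign_card.
Qed.

Lemma pair_factor (C : numClosedFieldType) N (i0 : 'I_N) (hi0 : val i0 = 0%N)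
  (z : config N) (p : 'I_N * 'I_N) : (p.1 < p.2)%N ->
  (-1) ^+ (upd i0 z false p.1 && upd i0 z false p.2) *
  (-1) ^+ (upd i0 z true p.1 && upd i0 z true p.2)
  = (if p.1 == i0 then (-1) ^+ (z p.2) else 1) :> C.
Proof.
move=> hlt.
have hp2 : p.2 != i0.
  by apply/eqP => h; move: hlt; rewrite h hi0.
rewrite !ffunE (negbTE hp2); case: eqP => _ /=; first by rewrite mul1r.
by case: (z p.1 && z p.2); rewrite /= ?mul1r // mulN1r opprK.
Qed.

Definition Fs (C : numClosedFieldType) N (e : rel 'I_N) (i0 : 'I_N) (z : config N) : C :=
  \prod_(p | Ppair e p) (if p.1 == i0 then (-1) ^+ (z p.2) else 1).

Lemma psi01 (C : numClosedFieldType) N (e : rel 'I_N) (i0 : 'I_N) (hi0 : val i0 = 0%N)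
  (z : config N) :
  graph_state C e (upd i0 z false) * graph_state C e (upd i0 z true) = Fs C e i0 z / 2 ^+ N.
Proof.
rewrite /graph_state mulrACA -invfM -expr2 sqrtCK !ec_sign -big_split /=.
congr (_ / _); apply: eq_bigr => p /andP [hlt _].
exact: pair_factor.
Qed.

Lemma Fs_flip (C : numClosedFieldType) N (e : rel 'I_N) (i0 j : 'I_N) (hi0 : val i0 = 0%N)
  (hirr : irreflexive e) (hj : e i0 j) (z : config N) :
  Fs C e i0 (flip z j) = - Fs C e i0 z.
Proof.
have hji : j != i0 by apply/eqP => h; move: hj; rewrite h hirr.
have hlt : (i0 < j)%N.
  by rewrite hi0 lt0n; apply/eqP => h; move/eqP: hji; apply; apply/val_inj; rewrite /= h hi0.
have hP : Ppair e (i0, j) by rewrite /Ppair /= hlt hj.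
rewrite /Fs (bigD1 (i0, j)) //= [in RHS](bigD1 (i0, j)) //= eqxx ffunE eqxx.
have -> : \prod_(p | Ppair e p && (p != (i0, j)))
     (if p.1 == i0 then (-1) ^+ (flip z j p.2) else 1) =
   \prod_(p | Ppair e p && (p != (i0, j))) (if p.1 == i0 then (-1) ^+ (z p.2) else 1) :> C.
  apply: eq_bigr => [[p1 p2]] /andP [_ hne] /=.
  case: eqP => // h1; rewrite ffunE; case: eqP => // h2.
  by move: hne; rewrite h1 h2 eqxx.
by case: (z j); rewrite /= ?mulN1r ?mul1r ?opprK.
Qed.

Lemma sum_cross (C : numClosedFieldType) N (e : rel 'I_N) (i0 j : 'I_N) (hi0 : val i0 = 0%N)
  (hirr : irreflexive e) (hj : e i0 j) (a : bool) :
  \sum_(z : config N) (z i0 == a)%:R *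
     (graph_state C e (upd i0 z false) * graph_state C e (upd i0 z true)) = 0.
Proof.
have hji : j != i0 by apply/eqP => h; move: hj; rewrite h hirr.
rewrite (eq_bigr (fun z : config N => (z i0 == a)%:R * (Fs C e i0 z / 2 ^+ N))); last first.
  by move=> z _; rewrite psi01.
set S := \sum_z _.
have hS : S = - S.
  rewrite {1}/S (sum_flip j) -sumrN; apply: eq_bigr => z _.
  have hij : (i0 == j) = false by apply/negbTE; rewrite eq_sym.
  rewrite (Fs_flip C hi0 hirr hj) ffunE hij; ring.
have : S * 2 = 0 by rewrite mulr_natr mulr2n {1}hS addNr.
by move/eqP; rewrite mulf_eq0 pnatr_eq0 orbF => /eqP.
Qed.



Definition kk (C : numClosedFieldType) N (e : rel 'I_N) (i0 : 'I_N) (a b : bool)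
  (z : config N) : C := (z i0 == a)%:R * graph_state C e (upd i0 z b).

Lemma kk_conj (C : numClosedFieldType) N (e : rel 'I_N) (i0 : 'I_N) a b z :
  (kk C e i0 a b z)^* = kk C e i0 a b z.
Proof. by rewrite /kk rmorphM /= conj_nat psi_conj. Qed.

Lemma ind_sq (C : numClosedFieldType) (b : bool) : (b%:R * b%:R : C) = b%:R.
Proof. by case: b; rewrite ?mul1r ?mul0r. Qed.

Lemma kk_orth (C : numClosedFieldType) N (e : rel 'I_N) (i0 j : 'I_N) (hi0 : val i0 = 0%N)
  (hirr : irreflexive e) (hj : e i0 j) (p q : bool * bool) :
  \sum_z kk C e i0 p.1 p.2 z * (kk C e i0 q.1 q.2 z)^* = (p == q)%:R * 2^-1.
Proof.
case: p q => [a b] [c d] /=.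
rewrite (eq_bigr (fun z : config N => ((z i0 == a)%:R * (z i0 == c)%:R) *
   (graph_state C e (upd i0 z b) * graph_state C e (upd i0 z d)))); last first.
  by move=> z _; rewrite kk_conj /kk; ring.
case: (eqVneq a c) => [<-|hac]; last first.
  rewrite big1; last first.
    move=> z _; case hza: (z i0 == a); last by rewrite !mul0r.
    by move/eqP: hza => ->; rewrite (negbTE hac) mulr0 mul0r.
  by rewrite xpair_eqE (negbTE hac) mul0r.
rewrite xpair_eqE eqxx /=.
under eq_bigr do rewrite ind_sq.
case: (eqVneq b d) => [<-|hbd].
  rewrite (eq_bigr (fun z : config N => (z i0 == a)%:R * (2 ^+ N)^-1)); last first.
    by move=> z _; rewrite psi_sq.
  rewrite -mulr_suml card_half /=; field.
  by rewrite expf_neq0 // pnatr_eq0.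
rewrite mul0r.
move: hbd; case: b; case: d => // _.
  rewrite (eq_bigr (fun z : config N => (z i0 == a)%:R *
   (graph_state C e (upd i0 z false) * graph_state C e (upd i0 z true)))); last first.
    by move=> z _; rewrite [X in _ * X]mulrC.
  exact: (sum_cross C hi0 hirr hj).
exact: (sum_cross C hi0 hirr hj).
Qed.

Lemma Qk (C : numClosedFieldType) N (e : rel 'I_N) (i0 : 'I_N) (z z' : config N) :
  graph_state C e (upd i0 z (z' i0)) * graph_state C e (upd i0 z' (z i0)) =
  \sum_a \sum_b kk C e i0 a b z * kk C e i0 b a z'.
Proof.
rewrite !big_bool /kk; case: (z i0); case: (z' i0); by rewrite /= ?mul1r ?mul0r ?mulr0 ?addr0 ?add0r.
Qed.

Lemma sum4_ex (C : numClosedFieldType) (A B X Y : finType) (F : A -> B -> X -> Y -> C) :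
  \sum_a \sum_b \sum_x \sum_y F a b x y = \sum_x \sum_y \sum_a \sum_b F a b x y.
Proof.
rewrite (eq_bigr (fun a => \sum_x \sum_y \sum_b F a b x y)); last first.
  move=> a _; rewrite exchange_big /=; apply: eq_bigr => x _; by rewrite exchange_big.
rewrite exchange_big /=; apply: eq_bigr => x _; by rewrite exchange_big.
Qed.

Lemma fin_ineq (C : numClosedFieldType) (S p q r s : C) :
  p * p^* + q * q^* + (r * r^* + s * s^*) <= 2^-1 * S ->
  0 <= S - 2 * (p * p^* + q * r^* + (r * q^* + s * s^*)).
Proof.
rewrite -subr_ge0 => h.
have h2 : 0 <= 2 * (2^-1 * S - (p * p^* + q * q^* + (r * r^* + s * s^*))) +
   2 * ((q - r) * (q - r)^*).
  by apply: addr_ge0; apply: mulr_ge0 => //; rewrite ?ler0n ?mul_conjC_ge0.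
suff -> : S - 2 * (p * p^* + q * r^* + (r * q^* + s * s^*)) =
   2 * (2^-1 * S - (p * p^* + q * q^* + (r * r^* + s * s^*))) +
   2 * ((q - r) * (q - r)^*) by [].
by rewrite rmorphB /=; field; rewrite ?pnatr_eq0.
Qed.

Lemma qform (C : numClosedFieldType) N (e : rel 'I_N) (i0 j : 'I_N) (hi0 : val i0 = 0%N)
  (hirr : irreflexive e) (hj : e i0 j) (Phi : config N -> C) :
  0 <= \sum_z Phi z * (Phi z)^* - 2 * \sum_(z : config N) \sum_(z' : config N)
     (graph_state C e (upd i0 z (z' i0)))^* * (Phi z * (Phi z')^*) *
     graph_state C e (upd i0 z' (z i0)).
Proof.
set c := fun a b => \sum_z kk C e i0 a b z * Phi z.
have hQ : \sum_(z : config N) \sum_(z' : config N)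
     (graph_state C e (upd i0 z (z' i0)))^* * (Phi z * (Phi z')^*) *
     graph_state C e (upd i0 z' (z i0)) = \sum_a \sum_b c a b * (c b a)^*.
  transitivity (\sum_(z : config N) \sum_(z' : config N) \sum_a \sum_b
     (kk C e i0 a b z * Phi z) * (kk C e i0 b a z' * Phi z')^*).
    apply: eq_bigr => z _; apply: eq_bigr => z' _.
    rewrite psi_conj mulrAC Qk mulr_suml; apply: eq_bigr => a _.
    rewrite mulr_suml; apply: eq_bigr => b _.
    rewrite rmorphM /= kk_conj; ring.
  rewrite -sum4_ex; apply: eq_bigr => a _; apply: eq_bigr => b _.
  rewrite rmorph_sum mulr_suml; apply: eq_bigr => z _.
  by rewrite mulr_sumr.
have hB := @bessel C (bool * bool)%type (config N) (fun p z => kk C e i0 p.1 p.2 z) 2^-1.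
have hm : 0 < (2^-1 : C) by rewrite invr_gt0 ltr0n.
move: {hB}(hB hm (kk_orth C hi0 hirr hj) Phi).
rewrite (eq_bigr (fun p : bool * bool => c p.1 p.2 * (c p.1 p.2)^*)); last first.
  move=> p _; rewrite /c; congr (_ * _^*); apply: eq_bigr => z _; by rewrite kk_conj.
rewrite hQ -(pair_bigA _ (fun a b => c a b * (c a b)^*)) /= !big_bool /=.
exact: fin_ineq.
Qed.



Lemma dec_rank1 (C : numClosedFieldType) (X : finType) (u : X -> C) :
  psd_dec (fun z z' => u z * (u z')^*).
Proof.
exists 'I_1, (fun _ => 1), (fun _ => u); split=> // z z'.
by rewrite big_ord1 mul1r.
Qed.

Lemma upd_eq N (i0 : 'I_N) (z z' : config N) :
  (upd i0 z (z' i0) == upd i0 z' (z i0)) = (z == z').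
Proof.
apply/eqP/eqP => [h|->] //.
have h0 : z' i0 = z i0 by have := congr1 (fun f : config N => f i0) h; rewrite !upd_at.
apply/ffunP => i; have := congr1 (fun f : config N => f i) h; rewrite !ffunE.
by case: eqP => [->|].
Qed.

Definition tt0 (C : numClosedFieldType) N (e : rel 'I_N) (i0 : 'I_N) (z : config N) : C :=
  kk C e i0 false true z - kk C e i0 true false z.

Definition ss (C : numClosedFieldType) N (e : rel 'I_N) (i0 : 'I_N) (p : bool * bool)
  (z : config N) : C := kk C e i0 p.1 p.2 z + kk C e i0 p.2 p.1 z.

Lemma tt0_conj (C : numClosedFieldType) N (e : rel 'I_N) (i0 : 'I_N) z :
  (tt0 C e i0 z)^* = tt0 C e i0 z.
Proof. by rewrite /tt0 rmorphB /= !kk_conj. Qed.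

Lemma ss_conj (C : numClosedFieldType) N (e : rel 'I_N) (i0 : 'I_N) p z :
  (ss C e i0 p z)^* = ss C e i0 p z.
Proof. by rewrite /ss rmorphD /= !kk_conj. Qed.

Lemma tt0_norm (C : numClosedFieldType) N (e : rel 'I_N) (i0 j : 'I_N) (hi0 : val i0 = 0%N)
  (hirr : irreflexive e) (hj : e i0 j) :
  \sum_z tt0 C e i0 z * (tt0 C e i0 z)^* = 1.
Proof.
have o := kk_orth C hi0 hirr hj.
rewrite (eq_bigr (fun z => (kk C e i0 (false, true).1 (false, true).2 z * (kk C e i0 (false, true).1 (false, true).2 z)^*
   - kk C e i0 (false, true).1 (false, true).2 z * (kk C e i0 (true, false).1 (true, false).2 z)^*)
   - (kk C e i0 (true, false).1 (true, false).2 z * (kk C e i0 (false, true).1 (false, true).2 z)^*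
   - kk C e i0 (true, false).1 (true, false).2 z * (kk C e i0 (true, false).1 (true, false).2 z)^*))); last first.
  by move=> z _; rewrite /tt0 /= rmorphB /=; ring.
by rewrite !sumrB !o /=; field; rewrite ?pnatr_eq0.
Qed.

Lemma Qid (C : numClosedFieldType) N (e : rel 'I_N) (i0 : 'I_N) (x : C) z z' :
  x * (\sum_a \sum_b kk C e i0 a b z * kk C e i0 b a z') =
  - (x / 2) * (tt0 C e i0 z * tt0 C e i0 z') +
  \sum_(p : bool * bool) x / 4 * ss C e i0 p z * ss C e i0 p z'.
Proof.
rewrite -(pair_bigA _ (fun a b => x / 4 * ss C e i0 (a, b) z * ss C e i0 (a, b) z')) /=.
by rewrite !big_bool /= /tt0 /ss /=; field.
Qed.

Lemma dec_sum1 (C : numClosedFieldType) (X J : finType) (u : J -> X -> C) :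
  psd_dec (fun z z' => \sum_j u j z * (u j z')^*).
Proof.
exists J, (fun _ => 1), u; split=> // z z'.
by apply: eq_bigr => j _; rewrite mul1r.
Qed.

Lemma PTrho_dec (C : numClosedFieldType) N (e : rel 'I_N) (i0 j : 'I_N) (hi0 : val i0 = 0%N)
  (hirr : irreflexive e) (hj : e i0 j) (x : C) (hx0 : 0 <= x) (hx2 : x <= 2) :
  psd_dec (PT i0 (depolarized_graph_state e x)).
Proof.
have hL := @lagrange C (config N) (tt0 C e i0) (tt0_norm C hi0 hirr hj).
set t := tt0 C e i0.
have hform : forall z z', PT i0 (depolarized_graph_state e x) z z' =
  (2 ^+ N + x)^-1 * ((1 - x / 2) * (t z * (t z')^*) +
    (2^-1 * \sum_(p : config N * config N) lw t p z * (lw t p z')^* +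
     x / 4 * \sum_(p : bool * bool) ss C e i0 p z * (ss C e i0 p z')^*)).
  move=> z z'.
  rewrite /PT /depolarized_graph_state upd_eq psi_conj -mulrA Qk Qid.
  rewrite hL tt0_conj.
  rewrite (eq_bigr (fun p : bool * bool => x / 4 * (ss C e i0 p z * (ss C e i0 p z')^*))); last first.
    by move=> p _; rewrite ss_conj mulrA.
  rewrite -mulr_sumr tt0_conj -/t; ring.
apply: (dec_ext (fun z z' => esym (hform z z'))).
apply: dec_scale.
  by rewrite invr_ge0 addr_ge0 // exprn_ge0 // ler0n.
apply: dec_add.
  apply: dec_scale; last exact: dec_rank1.
  rewrite subr_ge0 ler_pdivrMr ?ltr0n // mul1r //.
apply: dec_add; apply: dec_scale; last exact: dec_sum1.
- by rewrite invr_ge0 ler0n.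
- exact: dec_sum1.
- by rewrite divr_ge0 // ler0n.
Qed.



Lemma PT_tensor (C : numClosedFieldType) N (i0 : 'I_N) (rho : op C N) n
  (S S' : copies_config N n) :
  PT i0 (@tensor_power C N rho n) S S' =
  \prod_(k < n) PT i0 rho (copy_k S k) (copy_k S' k).
Proof.
rewrite /PT /tensor_power; apply: eq_bigr => k _.
by congr rho; apply/ffunP => i; rewrite !ffunE; case: (i == i0); rewrite ?ffunE.
Qed.

Definition Bops (C : numClosedFieldType) N n (i0 : 'I_N) (A : local_ops C N n) : local_ops C N n :=
  fun i b s => if i == i0 then (A i b s)^* else A i b s.

Lemma prod_split (C : numClosedFieldType) N n (i0 : 'I_N) (A : local_ops C N n)
  (c : config N) (S : copies_config N n) (v : bool) (W : {ffun 'I_n -> bool}) :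
  \prod_(i < N) A i (upd i0 c v i) (upd i0 S W i) =
  A i0 v W * \prod_(i < N | i != i0) A i (c i) (S i).
Proof.
rewrite (bigD1 i0) //= !upd_at; congr (_ * _); apply: eq_bigr => i hi.
by rewrite !ffunE (negbTE hi).
Qed.

Lemma prodB_split (C : numClosedFieldType) N n (i0 : 'I_N) (A : local_ops C N n)
  (c : config N) (S : copies_config N n) :
  \prod_(i < N) Bops i0 A i (c i) (S i) =
  (A i0 (c i0) (S i0))^* * \prod_(i < N | i != i0) A i (c i) (S i).
Proof.
rewrite (bigD1 i0) //= /Bops eqxx; congr (_ * _); apply: eq_bigr => i hi.
by rewrite (negbTE hi).
Qed.

Lemma PT_out (C : numClosedFieldType) N (i0 : 'I_N) (rho : op C N) n (A : local_ops C N n)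
  (c c' : config N) :
  PT i0 (slocc_output rho A) c c' =
  \sum_(S : copies_config N n) \sum_(S' : copies_config N n)
    (\prod_(i < N) Bops i0 A i (c i) (S i)) * PT i0 (@tensor_power C N rho n) S S'
    * (\prod_(i < N) Bops i0 A i (c' i) (S' i))^*.
Proof.
rewrite /PT /slocc_output.
rewrite (swap_sum i0 (fun S S' : copies_config N n =>
   (\prod_(i < N) A i (upd i0 c (c' i0) i) (S i)) * tensor_power rho S S'
   * (\prod_(i < N) A i (upd i0 c' (c i0) i) (S' i))^*)).
apply: eq_bigr => S _; apply: eq_bigr => S' _.
rewrite !prod_split !prodB_split !rmorphM /= conjCK; ring.
Qed.



Theorem mainTheorem4 (C : numClosedFieldType) (N : nat) (e : rel 'I_N)
  (hN : (2 <= N)%N) (hsym : symmetric e) (hirr : irreflexive e)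
  (hconn : forall i j : 'I_N, connect e i j)
  (x : C) (hx0 : 0 <= x) (hx2 : x <= 2) :
  ~ purifiable (depolarized_graph_state e x) (graph_state C e).
Proof.
have hN0 : (0 < N)%N by apply: leq_trans hN.
pose i0 : 'I_N := Ordinal hN0.
have hi0 : val i0 = 0%N by [].
pose j1 : 'I_N := Ordinal hN.
have [j hj] : exists j, e i0 j.
  case/connectP: (hconn i0 j1) => p.
  case: p => [|y p] /=.
    by move=> _ h; have := congr1 val h.
  by move=> /andP [hy _] _; exists y.
have hrho := PTrho_dec hi0 hirr hj hx0 hx2.
move=> hpur.
have heps : (0 : C) < 4^-1 by rewrite invr_gt0 ltr0n.
have [n [A [htr hov]]] := hpur _ heps.
have hdec : psd_dec (PT i0 (slocc_output (depolarized_graph_state e x) A)).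
  apply: (dec_ext (fun c c' => esym (PT_out i0 (depolarized_graph_state e x) A c c'))).
  apply: dec_out.
  apply: (dec_ext (fun S S' => esym (PT_tensor i0 (depolarized_graph_state e x) S S'))).
  exact: dec_tensor.
have hk := key hdec (qform hi0 hirr hj).
move: hk hov htr.
set T := trace_op _; set O := overlap _ _.
move=> hk hov htr.
rewrite -subr_ge0 in hov.
have h : 0 <= (T - 2 * O) + 2 * (O - (1 - 4^-1) * T).
  by apply: addr_ge0 => //; apply: mulr_ge0 => //; rewrite ler0n.
have e1 : (T - 2 * O) + 2 * (O - (1 - 4^-1) * T) = - (2^-1 * T).
  by field.
move: h; rewrite e1 oppr_ge0 => h.
have : 0 < 2^-1 * T by rewrite mulr_gt0 // invr_gt0 ltr0n.
by move=> hlt; have := lt_le_trans hlt h; rewrite ltxx.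
Qed.
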